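(* With $A,B,C$ as defined, set $\Sigma=B+C$. The map sending the conjugacy class of $f\in\mathrm{Rat}_2$ to $(A,\Sigma)$ (computed from either critical marking of $f$) is a well-defined bijection from $\mathcal M_2$ onto $\mathbf C^2$.
   Context: $\mathrm{Rat}_2$ is the space of holomorphic degree-$2$ maps of the Riemann sphere; $\mathcal M_2$ is the set of its Möbius conjugacy classes. Every $f\in\mathrm{Rat}_2$, together with an ordering $(\omega_1,\omega_2)$ of its two critical points, is Möbius conjugate (sending $\omega_1\mapsto0$, $\omega_2\mapsto\infty$) to a map $z\mapsto(\alpha z^2+\beta)/(\gamma z^2+\delta)$ with $\alpha\delta-\beta\gamma=1$, unique up to $(\alpha,\beta,\gamma,\delta)\mapsto(\alpha\lambda,\beta\lambda^{-3},\gamma\lambda^3,\delta\lambda^{-1})$, $\lambda\in\mathbf C\setminus\{0\}$; set $A=\alpha\delta$, $B=\alpha^3\beta$, $C=\gamma\delta^3$. Reversing the ordering of the critical points replaces $(A,B,C)$ by $(A,C,B)$. *)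

(* Defs.v *)
From HB Require Import structures.
From mathcomp Require Import all_boot all_order all_algebra.
From mathcomp Require Import complex.
Set Implicit Arguments. Unset Strict Implicit. Unset Printing Implicit Defensive.
Import GRing.Theory.
Local Open Scope ring_scope.

(* The Riemann sphere over a field F: [Some z] is the finite point z,
   [None] is the point at infinity. *)
Definition sphere (F : fieldType) := option F.

Section Sphere.
Variable F : fieldType.

Definition homog (p : sphere F) : F * F :=
  match p with Some z => (z, 1) | None => (1, 0) end.

(* the point [x : y] of the sphere (for (x,y) <> (0,0)) *)
Definition proj (x y : F) : sphere F := if y == 0 then None else Some (x / y).

Definition ratmap2 (a0 a1 a2 b0 b1 b2 : F) (p : sphere F) : sphere F :=
  let: (x, y) := homog p in
  proj (a2 * x ^+ 2 + a1 * x * y + a0 * y ^+ 2)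
       (b2 * x ^+ 2 + b1 * x * y + b0 * y ^+ 2).

(* Rat_2: holomorphic degree-2 self-maps of the sphere, i.e. maps given by
   two binary quadratic forms without a common zero on P^1. *)
Definition Rat2 (f : sphere F -> sphere F) : Prop :=
  exists a0 a1 a2 b0 b1 b2 : F,
    (forall x y : F, (x, y) <> (0, 0) ->
       ~ (a2 * x ^+ 2 + a1 * x * y + a0 * y ^+ 2 = 0 /\
          b2 * x ^+ 2 + b1 * x * y + b0 * y ^+ 2 = 0)) /\
    forall p, f p = ratmap2 a0 a1 a2 b0 b1 b2 p.

Definition mobius (p q r s : F) (z : sphere F) : sphere F :=
  let: (x, y) := homog z in proj (p * x + q * y) (r * x + s * y).

Definition mob_conj (f g : sphere F -> sphere F) : Prop :=
  exists p q r s : F, p * s - q * r != 0 /\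
    forall z, mobius p q r s (f z) = g (mobius p q r s z).

Definition normal_form (al be ga de : F) : sphere F -> sphere F :=
  ratmap2 be 0 al de 0 ga.

(* (a, s) = (A, Sigma) = (A, B + C) computed from some (either) critical
   marking of f, i.e. from some normalisation of f. *)
Definition ASigma_of (f : sphere F -> sphere F) (a s : F) : Prop :=
  exists al be ga de : F,
    al * de - be * ga = 1 /\ mob_conj f (normal_form al be ga de) /\
    a = al * de /\ s = al ^+ 3 * be + ga * de ^+ 3.

End Sphere.

(* Main.v *)
Require Import Defs.
From HB Require Import structures.
From mathcomp Require Import all_boot all_order all_algebra.
From mathcomp Require Import complex ring.
Import GRing.Theory Num.Theory.
Set Implicit Arguments. Unset Strict Implicit.
Local Open Scope ring_scope.


Section Basics.
Variable F : fieldType.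
Implicit Types x y : F.

Definition nz x y := (x != 0) || (y != 0).

Lemma nzP x y : nz x y <-> ~ (x = 0 /\ y = 0).
Proof.
rewrite /nz; split.
  by case/orP=> /eqP h [h1 h2].
move=> h; apply/negPn/negP; rewrite negb_or !negbK => /andP[/eqP h1 /eqP h2]; exact: h.
Qed.

Lemma nz_pair x y : (x, y) <> (0, 0) -> nz x y.
Proof. by move=> h; apply/nzP => -[h1 h2]; apply: h; rewrite h1 h2. Qed.

Lemma projZ (c x y : F) : c != 0 -> proj (c * x) (c * y) = proj x y.
Proof.
move=> hc; rewrite /proj mulf_eq0 (negbTE hc) /=.
case: ifP => // hy; congr Some; field; by rewrite hc hy.
Qed.

Lemma proj_homog (p : sphere F) : proj (homog p).1 (homog p).2 = p.
Proof.
case: p => [z|] /=; rewrite /proj /=; last by rewrite eqxx.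
by rewrite oner_eq0 divr1.
Qed.

Lemma homog_nz (p : sphere F) : nz (homog p).1 (homog p).2.
Proof. by case: p => [z|]; rewrite /nz /= oner_eq0 ?orbT. Qed.

Lemma sphere_ind (P : sphere F -> Prop) :
  (forall x y, nz x y -> P (proj x y)) -> forall z, P z.
Proof. move=> h z; rewrite -(proj_homog z); exact: h (homog_nz z). Qed.

Lemma proj_eq x y x' y' : nz x y -> nz x' y' ->
  (proj x y = proj x' y') <-> (x * y' = x' * y).
Proof.
move=> /nzP h /nzP h'; rewrite /proj.
case: (eqVneq y 0) => hy; case: (eqVneq y' 0) => hy'; split => //; try by [].
- by move=> _; rewrite hy hy' !mulr0.
- move=> e; exfalso; apply: h; split=> //; apply/eqP.
  move: e; rewrite hy mulr0 => /eqP; rewrite mulf_eq0 (negbTE hy') orbF.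
  by [].
- move=> e; exfalso; apply: h'; split=> //; apply/eqP.
  move: e; rewrite hy' mulr0 => /esym/eqP; rewrite mulf_eq0 (negbTE hy) orbF.
  by [].
- case=> e; apply/eqP; rewrite -subr_eq0.
  have -> : x * y' - x' * y = (x / y - x' / y') * (y * y') by field; rewrite hy hy'.
  by rewrite e subrr mul0r.
- move=> e; congr Some; apply/eqP; rewrite -subr_eq0.
  have -> : x / y - x' / y' = (x * y' - x' * y) / (y * y') by field; rewrite hy hy'.
  by rewrite e subrr mul0r.
Qed.

Definition qf (c0 c1 c2 x y : F) := c2 * x ^+ 2 + c1 * x * y + c0 * y ^+ 2.

Lemma homog_proj x y : nz x y ->
  exists c, c != 0 /\ homog (proj x y) = (c * x, c * y).
Proof.
move=> /nzP h; rewrite /proj; case: (eqVneq y 0) => hy /=.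
  have hx : x != 0 by apply/eqP => hx; apply: h.
  by exists x^-1; rewrite invr_eq0 hx mulVf // hy mulr0.
by exists y^-1; rewrite invr_eq0 hy mulVf // mulrC.
Qed.

Lemma ratmap2_proj a0 a1 a2 b0 b1 b2 x y : nz x y ->
  ratmap2 a0 a1 a2 b0 b1 b2 (proj x y) =
  proj (qf a0 a1 a2 x y) (qf b0 b1 b2 x y).
Proof.
move=> h; have [c [hc e]] := homog_proj h; rewrite /ratmap2 e.
rewrite -[RHS](@projZ (c ^+ 2)) ?expf_neq0 //; congr proj; rewrite /qf; ring.
Qed.

Lemma mobius_proj p q r s x y : nz x y ->
  mobius p q r s (proj x y) = proj (p * x + q * y) (r * x + s * y).
Proof.
move=> h; have [c [hc e]] := homog_proj h; rewrite /mobius e.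
rewrite -[RHS](@projZ c) //; congr proj; ring.
Qed.


Lemma M_nz p q r s x y : p * s - q * r != 0 -> nz x y ->
  nz (p * x + q * y) (r * x + s * y).
Proof.
move=> hd /nzP h; apply/nzP => -[e1 e2]; apply: h; split.
  apply/eqP; rewrite -(mulIr_eq0 _ (mulIf hd)).
  have -> : x * (p * s - q * r) = s * (p * x + q * y) - q * (r * x + s * y) by ring.
  by rewrite e1 e2 !mulr0 subrr.
apply/eqP; rewrite -(mulIr_eq0 _ (mulIf hd)).
have -> : y * (p * s - q * r) = p * (r * x + s * y) - r * (p * x + q * y) by ring.
by rewrite e1 e2 !mulr0 subrr.
Qed.

Lemma mobius_comp p q r s p' q' r' s' (z : sphere F) : p * s - q * r != 0 ->
  mobius p' q' r' s' (mobius p q r s z) =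
  mobius (p' * p + q' * r) (p' * q + q' * s) (r' * p + s' * r) (r' * q + s' * s) z.
Proof.
move=> hd; move: z; apply: sphere_ind => x y h.
rewrite !mobius_proj ?M_nz //; congr proj; ring.
Qed.

Lemma mobius_id (z : sphere F) : mobius 1 0 0 1 z = z.
Proof.
move: z; apply: sphere_ind => x y h; rewrite mobius_proj //; congr proj; ring.
Qed.

Lemma mobius_invl p q r s (z : sphere F) : p * s - q * r != 0 ->
  mobius s (-q) (-r) p (mobius p q r s z) = z.
Proof.
move=> hd; move: z; apply: sphere_ind => x y h.
rewrite !mobius_proj ?M_nz // -[RHS](@projZ (p * s - q * r)) //; congr proj; ring.
Qed.

Lemma mobius_invr p q r s (z : sphere F) : p * s - q * r != 0 ->
  mobius p q r s (mobius s (-q) (-r) p z) = z.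
Proof.
move=> hd; move: z; apply: sphere_ind => x y h.
have hd' : s * p - (- q) * (- r) != 0 by rewrite mulrNN mulrC.
rewrite !mobius_proj ?M_nz // -[RHS](@projZ (p * s - q * r)) //; congr proj; ring.
Qed.

Lemma mob_conj_refl (f : sphere F -> sphere F) : mob_conj f f.
Proof.
exists 1, 0, 0, 1; split; first by rewrite mulr1 mulr0 subr0 oner_eq0.
by move=> z; rewrite !mobius_id.
Qed.

Lemma mob_conj_sym (f g : sphere F -> sphere F) : mob_conj f g -> mob_conj g f.
Proof.
case=> [p [q [r [s [hd H]]]]]; exists s, (-q), (-r), p; split.
  by rewrite mulrNN mulrC.
move=> w; rewrite -{1}(@mobius_invr p q r s w hd) -H mobius_invl //.
Qed.

Lemma mob_conj_trans (f g h : sphere F -> sphere F) : mob_conj f g -> mob_conj g h -> mob_conj f h.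
Proof.
case=> [p [q [r [s [hd H]]]]] [p' [q' [r' [s' [hd' H']]]]].
exists (p' * p + q' * r), (p' * q + q' * s), (r' * p + s' * r), (r' * q + s' * s).
split.
  have -> : (p' * p + q' * r) * (r' * q + s' * s) - (p' * q + q' * s) * (r' * p + s' * r)
     = (p' * s' - q' * r') * (p * s - q * r) by ring.
  by rewrite mulf_neq0.
by move=> z; rewrite -!mobius_comp // H H'.
Qed.

End Basics.


Section Alg.
Variable F : fieldType.

Lemma eq_from1 (A B L R k : F) : L = R -> A - B = k * (L - R) -> A = B.
Proof. by move=> -> e; apply/eqP; rewrite -subr_eq0 e subrr mulr0. Qed.

Lemma eq_from3 (A B L1 R1 L2 R2 L3 R3 k1 k2 k3 : F) :
  L1 = R1 -> L2 = R2 -> L3 = R3 ->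
  A - B = k1 * (L1 - R1) + k2 * (L2 - R2) + k3 * (L3 - R3) -> A = B.
Proof.
by move=> -> -> -> e; apply/eqP; rewrite -subr_eq0 e !subrr !mulr0 !addr0.
Qed.

Lemma prop_lemma (a b c d a' b' c' d' : F) :
  a * c' = a' * c -> b * d' = b' * d -> a * d' + b * c' = a' * d + b' * c ->
  a * d - b * c != 0 ->
  exists l, [/\ a' = l * a, b' = l * b, c' = l * c & d' = l * d].
Proof.
move=> e1 e2 e3 hD; exists ((a * d' - c * b') / (a * d - b * c)).
have key : forall t u v, t * (a * d - b * c) = (a * d' - c * b') * u ->
   v = u -> t = (a * d' - c * b') / (a * d - b * c) * v.
  move=> t u v h ->; apply: (mulIf hD); rewrite h; field; exact: hD.
split; apply: key => //.
- apply: (eq_from3 (k1 := b) (k2 := 0) (k3 := (-a)) e1 e2 e3); ring.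
- apply: (eq_from3 (k1 := 0) (k2 := (-a)) (k3 := 0) e1 e2 e3); ring.
- apply: (eq_from3 (k1 := d) (k2 := 0) (k3 := (-c)) e1 e2 e3); ring.
- apply: (eq_from3 (k1 := 0) (k2 := (-c)) (k3 := 0) e1 e2 e3); ring.
Qed.

End Alg.

Section NF.
Variable C : numClosedFieldType.
Implicit Types x y : C.

Definition nocommon (a0 a1 a2 b0 b1 b2 : C) :=
  forall x y, nz x y -> ~ (qf a0 a1 a2 x y = 0 /\ qf b0 b1 b2 x y = 0).

Lemma nocommon_nz a0 a1 a2 b0 b1 b2 x y : nocommon a0 a1 a2 b0 b1 b2 ->
  nz x y -> nz (qf a0 a1 a2 x y) (qf b0 b1 b2 x y).
Proof. by move=> h hxy; apply/nzP; exact: h. Qed.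

Lemma nf_nocommon (al be ga de : C) : al * de - be * ga != 0 ->
  nocommon be 0 al de 0 ga.
Proof.
move=> hd x y /nzP h [e1 e2]; apply: h; split.
  apply/eqP; suff: x ^+ 2 == 0 by rewrite expf_eq0.
  rewrite -(mulIr_eq0 _ (mulIf hd)); apply/eqP.
  apply: (eq_from3 (k1 := de) (k2 := (-be)) (k3 := 0) e1 e2 e2); rewrite /qf; ring.
apply/eqP; suff: y ^+ 2 == 0 by rewrite expf_eq0.
  rewrite -(mulIr_eq0 _ (mulIf hd)); apply/eqP.
apply: (eq_from3 (k1 := (-ga)) (k2 := al) (k3 := 0) e1 e2 e2); rewrite /qf; ring.
Qed.

Lemma conj_cross a0 a1 a2 b0 b1 b2 c0 c1 c2 d0 d1 d2 p q r s :
  nocommon a0 a1 a2 b0 b1 b2 -> nocommon c0 c1 c2 d0 d1 d2 ->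
  p * s - q * r != 0 ->
  (forall z, mobius p q r s (ratmap2 a0 a1 a2 b0 b1 b2 z) =
             ratmap2 c0 c1 c2 d0 d1 d2 (mobius p q r s z)) ->
  forall x y, nz x y ->
  (p * qf a0 a1 a2 x y + q * qf b0 b1 b2 x y) *
     qf d0 d1 d2 (p * x + q * y) (r * x + s * y) =
  qf c0 c1 c2 (p * x + q * y) (r * x + s * y) *
     (r * qf a0 a1 a2 x y + s * qf b0 b1 b2 x y).
Proof.
move=> hf hg hd H x y h; move: (H (proj x y)).
have h1 := nocommon_nz hf h; have h2 := M_nz hd h.
have h3 := nocommon_nz hg h2; have h4 := M_nz hd h1.
rewrite ratmap2_proj // mobius_proj // mobius_proj // ratmap2_proj //.
by move/proj_eq => /(_ h4 h3).
Qed.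

Definition crit (h : sphere C -> sphere C) p := forall q, h q = h p -> q = p.

Lemma proj01 : proj (0 : C) 1 = Some 0.
Proof. by rewrite /proj oner_eq0 mul0r. Qed.
Lemma proj10 : proj (1 : C) 0 = None.
Proof. by rewrite /proj eqxx. Qed.
Lemma nz01 : nz (0 : C) 1. Proof. by rewrite /nz oner_eq0 orbT. Qed.
Lemma nz10 : nz (1 : C) 0. Proof. by rewrite /nz oner_eq0. Qed.

Lemma crit_nf0 (al be ga de : C) : al * de - be * ga != 0 ->
  crit (normal_form al be ga de) (Some 0).
Proof.
move=> hd w; rewrite -(proj_homog w) -proj01.
move: (homog_nz w) => h; set x := (homog w).1; set y := (homog w).2.
rewrite /normal_form !ratmap2_proj ?nz01 //.
move/proj_eq => /(_ (nocommon_nz (nf_nocommon hd) h)).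
move=> /(_ (nocommon_nz (nf_nocommon hd) nz01)) e.
have hx : x = 0.
  apply/eqP; suff: x ^+ 2 == 0 by rewrite expf_eq0.
  rewrite -(mulIr_eq0 _ (mulIf hd)); apply/eqP.
  apply: (eq_from1 (k := 1) e); rewrite /qf; ring.
apply/proj_eq => //; first exact: nz01.
by rewrite hx !mul0r.
Qed.

Lemma crit_nfoo (al be ga de : C) : al * de - be * ga != 0 ->
  crit (normal_form al be ga de) None.
Proof.
move=> hd w; rewrite -(proj_homog w) -proj10.
move: (homog_nz w) => h; set x := (homog w).1; set y := (homog w).2.
rewrite /normal_form !ratmap2_proj ?nz10 //.
move/proj_eq => /(_ (nocommon_nz (nf_nocommon hd) h)).
move=> /(_ (nocommon_nz (nf_nocommon hd) nz10)) e.
have hy : y = 0.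
  apply/eqP; suff: y ^+ 2 == 0 by rewrite expf_eq0.
  rewrite -(mulIr_eq0 _ (mulIf hd)); apply/eqP.
  apply: (eq_from1 (k := (-1)) e); rewrite /qf; ring.
apply/proj_eq => //; first exact: nz10.
by rewrite hy !mulr0.
Qed.

Lemma crit_nf (al be ga de : C) w :
  crit (normal_form al be ga de) w -> w = Some 0 \/ w = None.
Proof.
case: w => [z|] h; last by right.
left; case: (eqVneq z 0) => [-> //|hz].
have e : Some (- z) = Some z.
  apply: h; rewrite /normal_form /ratmap2 /=; congr proj; ring.
case: e => e; exfalso.
have : z *+ 2 == 0 by rewrite mulr2n -{1}e addNr.
by rewrite mulrn_eq0 (negbTE hz).
Qed.

Lemma crit_conj (f g : sphere C -> sphere C) p q r s w :
  p * s - q * r != 0 ->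
  (forall z, mobius p q r s (f z) = g (mobius p q r s z)) ->
  crit f w -> crit g (mobius p q r s w).
Proof.
move=> hd H hw v e.
rewrite -(@mobius_invr _ p q r s v hd) in e *.
rewrite -!H in e.
have e' := congr1 (mobius s (-q) (-r) p) e.
rewrite !mobius_invl // in e'.
by rewrite (hw _ e').
Qed.

End NF.


Section Inv.
Variable C : numClosedFieldType.

Lemma proj_some0 (a b : C) : proj a b = Some 0 -> a = 0 /\ b != 0.
Proof.
rewrite /proj; case: (eqVneq b 0) => // hb [e]; split => //.
by move/eqP: e; rewrite mulf_eq0 invr_eq0 (negbTE hb) orbF => /eqP.
Qed.

Lemma proj_none (a b : C) : proj a b = None -> b = 0.
Proof. by rewrite /proj; case: (eqVneq b 0). Qed.

Lemma nz11 : nz (1 : C) 1. Proof. by rewrite /nz oner_eq0. Qed.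

Lemma nf_conj_inv (al be ga de al' be' ga' de' : C) :
  al * de - be * ga = 1 -> al' * de' - be' * ga' = 1 ->
  mob_conj (normal_form al be ga de) (normal_form al' be' ga' de') ->
  al * de = al' * de' /\
  al ^+ 3 * be + ga * de ^+ 3 = al' ^+ 3 * be' + ga' * de' ^+ 3.
Proof.
move=> h1 h2 [p [q [r [s [hd H]]]]].
have hd1 : al * de - be * ga != 0 by rewrite h1 oner_eq0.
have hd2 : al' * de' - be' * ga' != 0 by rewrite h2 oner_eq0.
have c0 := crit_conj hd H (crit_nf0 hd1).
have coo := crit_conj hd H (crit_nfoo hd1).
have k0 : mobius p q r s (Some 0) = proj q s.
  by rewrite -proj01 mobius_proj ?nz01 //; congr proj; ring.
have koo : mobius p q r s None = proj p r.
  by rewrite -proj10 mobius_proj ?nz10 //; congr proj; ring.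
have neq : proj q s <> proj p r.
  rewrite -k0 -koo => e; have := congr1 (mobius s (-q) (-r) p) e.
  by rewrite !mobius_invl.
rewrite /normal_form in H.
have cross := conj_cross (nf_nocommon hd1) (nf_nocommon hd2) hd H.
have e10 := cross _ _ (@nz10 C); have e01 := cross _ _ (@nz01 C); have e11 := cross _ _ nz11.
case: (crit_nf c0); case: (crit_nf coo); rewrite k0 koo.
- by move=> e1 e2; exfalso; apply: neq; rewrite e1 e2.
- move=> /proj_none hr /proj_some0 [hq hs].
  subst q r.
  have hp : p != 0 by apply: contraNneq hd => ->; rewrite !mul0r subrr.
  have hps : p * s != 0 by rewrite mulf_neq0.
  have E1 : p * al * (ga' * p ^+ 2) = al' * p ^+ 2 * (s * ga).
    apply: (eq_from1 (k := 1) e10); rewrite /qf; ring.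
  have E2 : p * be * (de' * s ^+ 2) = be' * s ^+ 2 * (s * de).
    apply: (eq_from1 (k := 1) e01); rewrite /qf; ring.
  have E3 : p * al * (de' * s ^+ 2) + p * be * (ga' * p ^+ 2) = al' * p ^+ 2 * (s * de) + be' * s ^+ 2 * (s * ga).
    apply: (eq_from3 (k1 := 1) (k2 := -1) (k3 := -1) e11 e10 e01); rewrite /qf; ring.
  have E4 : p * al * (s * de) - p * be * (s * ga) != 0.
    have -> : p * al * (s * de) - p * be * (s * ga) = p * s * (al * de - be * ga) by ring.
    by rewrite mulf_neq0.
  have [l [ha hb hc hdd]] := prop_lemma E1 E2 E3 E4.
  have hal : al' = l * al / p.
    apply: (mulIf (expf_neq0 2 hp)); rewrite ha; field; exact: hp.
  have hbe : be' = l * p * be / s ^+ 2.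
    apply: (mulIf (expf_neq0 2 hs)); rewrite hb; field; exact: hs.
  have hga : ga' = l * s * ga / p ^+ 2.
    apply: (mulIf (expf_neq0 2 hp)); rewrite hc; field; exact: hp.
  have hde : de' = l * de / s.
    apply: (mulIf (expf_neq0 2 hs)); rewrite hdd; field; exact: hs.
  have hl2 : l ^+ 2 = p * s.
    have : al' * de' - be' * ga' = l ^+ 2 * (al * de - be * ga) / (p * s).
      rewrite hal hbe hga hde; field; by rewrite hp hs.
    rewrite h1 h2 mulr1 => /esym/eqP; rewrite (can2_eq (divfK hps) (mulfK hps)) mul1r.
    by move/eqP.
  have hl4 : l ^+ 4 = (p * s) ^+ 2 by rewrite -hl2 -exprM.
  split; apply/esym.
    rewrite hal hde.
    have -> : l * al / p * (l * de / s) = l ^+ 2 * (al * de) / (p * s) by field; rewrite hp hs.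
    by rewrite hl2 mulrC mulKf.
  rewrite hal hbe hga hde.
  have -> : (l * al / p) ^+ 3 * (l * p * be / s ^+ 2) + l * s * ga / p ^+ 2 * (l * de / s) ^+ 3
     = l ^+ 4 * (al ^+ 3 * be + ga * de ^+ 3) / (p * s) ^+ 2 by field; rewrite hp hs.
  by rewrite hl4 mulrC mulKf // expf_neq0.
- move=> /proj_some0 [hp hr] /proj_none hs.
  subst p s.
  have hq : q != 0 by apply: contraNneq hd => ->; rewrite !mul0r subrr.
  have hr' : r != 0 by apply: contraNneq hd => ->; rewrite !mulr0 subrr.
  have hqr : q * r != 0 by rewrite mulf_neq0.
  have E1 : q * ga * (de' * r ^+ 2) = be' * r ^+ 2 * (r * al).
    apply: (eq_from1 (k := 1) e10); rewrite /qf; ring.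
  have E2 : q * de * (ga' * q ^+ 2) = al' * q ^+ 2 * (r * be).
    apply: (eq_from1 (k := 1) e01); rewrite /qf; ring.
  have E3 : q * ga * (ga' * q ^+ 2) + q * de * (de' * r ^+ 2) = be' * r ^+ 2 * (r * be) + al' * q ^+ 2 * (r * al).
    apply: (eq_from3 (k1 := 1) (k2 := -1) (k3 := -1) e11 e10 e01); rewrite /qf; ring.
  have E4 : q * ga * (r * be) - q * de * (r * al) != 0.
    have -> : q * ga * (r * be) - q * de * (r * al) = - (q * r) * (al * de - be * ga) by ring.
    by rewrite mulf_neq0 ?oppr_eq0.
  have [l [ha hb hc hdd]] := prop_lemma E1 E2 E3 E4.
  have hbe : be' = l * q * ga / r ^+ 2.
    apply: (mulIf (expf_neq0 2 hr')); rewrite ha; field; exact: hr'.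
  have hal : al' = l * de / q.
    apply: (mulIf (expf_neq0 2 hq)); rewrite hb; field; exact: hq.
  have hde : de' = l * al / r.
    apply: (mulIf (expf_neq0 2 hr')); rewrite hc; field; exact: hr'.
  have hga : ga' = l * r * be / q ^+ 2.
    apply: (mulIf (expf_neq0 2 hq)); rewrite hdd; field; exact: hq.
  have hl2 : l ^+ 2 = q * r.
    have : al' * de' - be' * ga' = l ^+ 2 * (al * de - be * ga) / (q * r).
      rewrite hal hbe hga hde; field; by rewrite hq hr'.
    rewrite h1 h2 mulr1 => /esym/eqP; rewrite (can2_eq (divfK hqr) (mulfK hqr)) mul1r.
    by move/eqP.
  have hl4 : l ^+ 4 = (q * r) ^+ 2 by rewrite -hl2 -exprM.
  split; apply/esym.
    rewrite hal hde.
    have -> : l * de / q * (l * al / r) = l ^+ 2 * (al * de) / (q * r) by field; rewrite hq hr'.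
    by rewrite hl2 mulrC mulKf.
  rewrite hal hbe hga hde.
  have -> : (l * de / q) ^+ 3 * (l * q * ga / r ^+ 2) + l * r * be / q ^+ 2 * (l * al / r) ^+ 3
     = l ^+ 4 * (al ^+ 3 * be + ga * de ^+ 3) / (q * r) ^+ 2 by field; rewrite hq hr'.
  by rewrite hl4 mulrC mulKf // expf_neq0.
- by move=> e1 e2; exfalso; apply: neq; rewrite e1 e2.
Qed.

End Inv.


Section Same.
Variable C : numClosedFieldType.

Lemma neq0_of_mulN1 (a b : C) : a * b = -1 -> a != 0 /\ b != 0.
Proof.
move=> h; split; apply/eqP => e; move: h; rewrite e ?mul0r ?mulr0 => /eqP;
  by rewrite eq_sym oppr_eq0 oner_eq0.
Qed.

Lemma diag_conj (al be ga de al' be' ga' de' p s l : C) :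
  al * de - be * ga != 0 -> p != 0 -> s != 0 -> l != 0 ->
  al' * p ^+ 2 = l * p * al -> be' * s ^+ 2 = l * p * be ->
  ga' * p ^+ 2 = l * s * ga -> de' * s ^+ 2 = l * s * de ->
  mob_conj (normal_form al be ga de) (normal_form al' be' ga' de').
Proof.
move=> hd hp hs hl e1 e2 e3 e4; exists p, 0, 0, s; split.
  by rewrite mulr0 subr0 mulf_neq0.
have hK : p * s - 0 * 0 != 0 by rewrite mulr0 subr0 mulf_neq0.
apply: sphere_ind => x y h; rewrite /normal_form.
have h1 := nocommon_nz (nf_nocommon hd) h.
rewrite ratmap2_proj // mobius_proj // mobius_proj // ratmap2_proj ?M_nz //.
rewrite -[LHS](@projZ _ l) //; congr proj.
  apply: (eq_from3 (k1 := - x ^+ 2) (k2 := - y ^+ 2) (k3 := 0) e1 e2 e2); rewrite /qf; ring.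
apply: (eq_from3 (k1 := - x ^+ 2) (k2 := - y ^+ 2) (k3 := 0) e3 e4 e4); rewrite /qf; ring.
Qed.

Lemma swap_conj (al be ga de : C) : al * de - be * ga != 0 ->
  mob_conj (normal_form al be ga de) (normal_form de ga be al).
Proof.
move=> hd; exists 0, 1, 1, 0; split.
  by rewrite mul0r mul1r sub0r oppr_eq0 oner_eq0.
have hK : (0 : C) * 0 - 1 * 1 != 0 by rewrite mul0r mul1r sub0r oppr_eq0 oner_eq0.
apply: sphere_ind => x y h; rewrite /normal_form.
have h1 := nocommon_nz (nf_nocommon hd) h.
rewrite ratmap2_proj // mobius_proj // mobius_proj // ratmap2_proj ?M_nz //.
congr proj; rewrite /qf; ring.
Qed.

Lemma nf_same_ABC (al be ga de al' be' ga' de' : C) :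
  al * de - be * ga = 1 -> al' * de' - be' * ga' = 1 ->
  al * de = al' * de' -> al ^+ 3 * be = al' ^+ 3 * be' ->
  ga * de ^+ 3 = ga' * de' ^+ 3 ->
  mob_conj (normal_form al be ga de) (normal_form al' be' ga' de').
Proof.
move=> h1 h2 hA hB hC.
have hd1 : al * de - be * ga != 0 by rewrite h1 oner_eq0.
have one0 : (1 : C) != 0 := oner_neq0 C.
case: (eqVneq al 0) => hal.
-
  have hal' : al' = 0.
    apply/eqP; apply/negPn/negP => hal'.
    have hbe' : be' = 0.
      by move: hB; rewrite hal expr0n /= mul0r => /esym/eqP;
         rewrite mulf_eq0 expf_eq0 /= (negbTE hal') => /eqP.
    by move: h2 hA; rewrite hbe' mul0r subr0 hal mul0r => -> /esym/eqP; rewrite oner_eq0.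
  subst al al'.
  have hbg : be * ga = -1 by apply/eqP; rewrite -subr_eq0 -oppr_eq0 -h1; apply/eqP; ring.
  have hbg' : be' * ga' = -1 by apply/eqP; rewrite -subr_eq0 -oppr_eq0 -h2; apply/eqP; ring.
  have hga := (neq0_of_mulN1 hbg).2.
  have hga' := (neq0_of_mulN1 hbg').2.
  have ebe : be = - 1 / ga by apply: (mulIf hga); rewrite hbg; field.
  have ebe' : be' = - 1 / ga' by apply: (mulIf hga'); rewrite hbg'; field.
  case: (eqVneq de 0) => hde.
  +
    have hde' : de' = 0.
      move: hC; rewrite hde expr0n /= mulr0 => /esym/eqP.
      by rewrite mulf_eq0 (negbTE hga') expf_eq0 /= => /eqP.
    subst de de'.
    set p := 3.-root (ga ^+ 2 / ga' ^+ 2).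
    have hp3 : p ^+ 3 = ga ^+ 2 / ga' ^+ 2 by rewrite /p rootCK.
    have hp : p != 0.
      apply/eqP => e; move: hp3; rewrite e expr0n /= => /esym/eqP.
      by rewrite mulf_eq0 invr_eq0 !expf_eq0 /= (negbTE hga) (negbTE hga').
    apply: (@diag_conj _ _ _ _ _ _ _ _ p 1 (ga' * p ^+ 2 / ga)) => //.
    * by rewrite !mulf_neq0 ?invr_eq0 ?expf_neq0.
    * by rewrite !mulr0 !mul0r.
    * rewrite ebe ebe'; apply: (mulIf hga'); apply: (mulIf hga).
      have -> : ga' * p ^+ 2 / ga * p * (- 1 / ga) * ga' * ga =
                - (p ^+ 3) * (ga' ^+ 2 / ga) by field; rewrite hga.
      rewrite hp3; field; by rewrite hga hga'.
    * by field.
    * by rewrite !mulr0 mul0r.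
  +
    have hde' : de' != 0.
      apply/eqP => e; move: hC; rewrite e expr0n /= mulr0 => /eqP.
      by rewrite mulf_eq0 expf_eq0 /= (negbTE hga) (negbTE hde).
    have ega' : ga' = ga * de ^+ 3 / de' ^+ 3.
      by apply: (mulIf (expf_neq0 3 hde')); rewrite -hC; field.
    apply: (@diag_conj _ _ _ _ _ _ _ _ (de' ^+ 2 / de ^+ 2) 1 (de' / de)) => //.
    * by rewrite !mulf_neq0 ?invr_eq0 ?expf_neq0.
    * by rewrite !mulf_neq0 ?invr_eq0.
    * by rewrite !mulr0 !mul0r.
    * rewrite ebe' ega' ebe; field; by rewrite hga hde hde'.
    * rewrite ega'; field; by rewrite hde hde'.
    * by rewrite expr1n !mulr1; field.
-
  have hal' : al' != 0.
    apply/negP => /eqP hal'.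
    have hbe : be = 0.
      by move: hB; rewrite hal' expr0n /= mul0r => /eqP;
         rewrite mulf_eq0 expf_eq0 /= (negbTE hal) => /eqP.
    by move: h1 hA; rewrite hbe mul0r subr0 hal' mul0r => ->; apply/eqP; rewrite oner_eq0.
  have T : ga' * al ^+ 3 = ga * al' ^+ 3.
    case: (eqVneq de' 0) => hde'.
    + have hde : de = 0.
        by move: hA; rewrite hde' mulr0 => /eqP; rewrite mulf_eq0 (negbTE hal) => /eqP.
      have hbg : be * ga = -1 by apply/eqP; rewrite -subr_eq0 -oppr_eq0 -h1 hde; apply/eqP; ring.
      have hbg' : be' * ga' = -1 by apply/eqP; rewrite -subr_eq0 -oppr_eq0 -h2 hde'; apply/eqP; ring.
      have hbe := (neq0_of_mulN1 hbg).1.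
      have hbe' := (neq0_of_mulN1 hbg').1.
      apply: (mulIf (mulf_neq0 hbe hbe')).
      apply: (eq_from3 (k1 := -1) (k2 := - al' ^+ 3 * be') (k3 := al ^+ 3 * be) hB hbg hbg'); ring.
    + apply: (mulIf (expf_neq0 3 hde')).
      apply: (eq_from3 (k1 := 0) (k2 := - al ^+ 3) (k3 := ga * (al ^+ 2 * de ^+ 2 + al * de * al' * de' + al' ^+ 2 * de' ^+ 2)) hB hC hA); ring.
  have ebe' : be' = al ^+ 3 * be / al' ^+ 3.
    by apply: (mulIf (expf_neq0 3 hal')); rewrite [LHS]mulrC -hB; field.
  have ede' : de' = al * de / al'.
    by apply: (mulIf hal'); rewrite [LHS]mulrC -hA; field.
  have ega' : ga' = ga * al' ^+ 3 / al ^+ 3.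
    by apply: (mulIf (expf_neq0 3 hal)); rewrite T; field.
  apply: (@diag_conj _ _ _ _ _ _ _ _ (al ^+ 2 / al' ^+ 2) 1 (al / al')) => //.
  + by rewrite !mulf_neq0 ?invr_eq0 ?expf_neq0.
  + by rewrite !mulf_neq0 ?invr_eq0.
  + field; by rewrite hal'.
  + rewrite ebe'; field; by rewrite hal'.
  + rewrite ega'; field; by rewrite hal hal'.
  + rewrite ede'; field; by rewrite hal'.
Qed.

Lemma nf_same_conj (al be ga de al' be' ga' de' : C) :
  al * de - be * ga = 1 -> al' * de' - be' * ga' = 1 ->
  al * de = al' * de' ->
  al ^+ 3 * be + ga * de ^+ 3 = al' ^+ 3 * be' + ga' * de' ^+ 3 ->
  mob_conj (normal_form al be ga de) (normal_form al' be' ga' de').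
Proof.
move=> h1 h2 hA hS.
have P1 : (al ^+ 3 * be) * (ga * de ^+ 3) = (al * de) ^+ 3 * (al * de - 1).
  by apply: (eq_from1 (k := - (al * de) ^+ 3) h1); ring.
have P2 : (al' ^+ 3 * be') * (ga' * de' ^+ 3) = (al * de) ^+ 3 * (al * de - 1).
  by rewrite hA; apply: (eq_from1 (k := - (al' * de') ^+ 3) h2); ring.
have : (al' ^+ 3 * be' - al ^+ 3 * be) * (al' ^+ 3 * be' - ga * de ^+ 3) == 0.
  apply/eqP; apply: (eq_from3 (k1 := - al' ^+ 3 * be') (k2 := -1) (k3 := 1) hS P2 P1); ring.
rewrite mulf_eq0 !subr_eq0 => /orP[/eqP eB|/eqP eB].
- apply: nf_same_ABC => //.
  apply: (eq_from1 (k := 1) hS); rewrite eB; ring.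
- have hd1 : al * de - be * ga != 0 by rewrite h1 oner_eq0.
  apply: mob_conj_trans (swap_conj hd1) _.
  apply: nf_same_ABC => //.
  + by rewrite -h1; ring.
  + by rewrite -hA mulrC.
  + by rewrite eB; ring.
  + move: hS; rewrite eB => hS; apply: (eq_from1 (k := 1) hS); ring.
Qed.

End Same.


Section Quad.
Variable C : numClosedFieldType.

Lemma two_neq0 : (2 : C) != 0.
Proof. by rewrite pnatr_eq0. Qed.

Lemma factor2 (c0 c1 c2 : C) : exists u1 v1 u2 v2 : C,
  [/\ c2 = u1 * u2, c1 = u1 * v2 + u2 * v1 & c0 = v1 * v2].
Proof.
case: (eqVneq c2 0) => hc2.
  by exists 0, 1, c1, c0; split; rewrite ?hc2; ring.
set d := sqrtC (c1 ^+ 2 - 4 * c2 * c0).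
have hd : d ^+ 2 = c1 ^+ 2 - 4 * c2 * c0 by rewrite sqrtCK.
have h2 := two_neq0.
exists 1, ((c1 - d) / (2 * c2)), c2, ((c1 + d) / 2); split.
- by ring.
- by field.
- apply: (mulIf (mulf_neq0 (mulf_neq0 h2 h2) hc2)).
  have -> : (c1 - d) / (2 * c2) * ((c1 + d) / 2) * (2 * 2 * c2) = c1 ^+ 2 - d ^+ 2.
    by field.
  by apply: (eq_from1 (k := 1) hd); ring.
Qed.

Lemma qf_zero (c0 c1 c2 : C) : exists x y, nz x y /\ qf c0 c1 c2 x y = 0.
Proof.
have [u1 [v1 [u2 [v2 [e2 e1 e0]]]]] := factor2 c0 c1 c2.
case: (boolP (nz v1 (- u1))) => h.
  by exists v1, (- u1); split => //; rewrite /qf e2 e1 e0; ring.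
exists 1, 0; split; first by rewrite /nz oner_eq0.
move: h; rewrite /nz negb_or !negbK oppr_eq0 => /andP[/eqP h1 /eqP h2].
by rewrite /qf e2 e1 e0 h1 h2; ring.
Qed.

Definition res (a0 a1 a2 b0 b1 b2 : C) :=
  (a2 * b0 - a0 * b2) ^+ 2 - (a2 * b1 - a1 * b2) * (a1 * b0 - a0 * b1).

Lemma res_nz a0 a1 a2 b0 b1 b2 : nocommon a0 a1 a2 b0 b1 b2 ->
  res a0 a1 a2 b0 b1 b2 != 0.
Proof.
move=> H; have [s1 [t1 [s2 [t2 [e2 e1 e0]]]]] := factor2 a0 a1 a2.
have E : res a0 a1 a2 b0 b1 b2 = qf b0 b1 b2 t1 (- s1) * qf b0 b1 b2 t2 (- s2).
  by rewrite /res /qf e2 e1 e0; ring.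
rewrite E mulf_eq0; apply/negP => /orP[] /eqP hq.
- case: (boolP (nz t1 (- s1))) => h.
    by apply: (H _ _ h); split => //; rewrite /qf e2 e1 e0; ring.
  move: h; rewrite /nz negb_or !negbK oppr_eq0 => /andP[/eqP h1 /eqP h2].
  have [x [y [hxy hz]]] := qf_zero b0 b1 b2.
  by apply: (H _ _ hxy); split => //; rewrite /qf e2 e1 e0 h1 h2; ring.
- case: (boolP (nz t2 (- s2))) => h.
    by apply: (H _ _ h); split => //; rewrite /qf e2 e1 e0; ring.
  move: h; rewrite /nz negb_or !negbK oppr_eq0 => /andP[/eqP h1 /eqP h2].
  have [x [y [hxy hz]]] := qf_zero b0 b1 b2.
  by apply: (H _ _ hxy); split => //; rewrite /qf e2 e1 e0 h1 h2; ring.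
Qed.

Lemma mid0 (a0 a1 a2 b0 b1 b2 : C) : nocommon a0 a1 a2 b0 b1 b2 ->
  a2 * b1 = a1 * b2 -> a1 * b0 = a0 * b1 -> a1 = 0 /\ b1 = 0.
Proof.
move=> H e1 e2.
case: (eqVneq a1 0) => ha1; case: (eqVneq b1 0) => hb1 //; exfalso.
- have [x [y [hxy hz]]] := qf_zero b0 b1 b2.
  apply: (H _ _ hxy); split => //; apply/eqP.
  rewrite -(mulIr_eq0 _ (mulIf hb1)); apply/eqP.
  apply: (eq_from3 (k1 := x ^+ 2) (k2 := - y ^+ 2) (k3 := a1) e1 e2 hz); rewrite /qf; ring.
- have [x [y [hxy hz]]] := qf_zero a0 a1 a2.
  apply: (H _ _ hxy); split => //; apply/eqP.
  rewrite -(mulIr_eq0 _ (mulIf ha1)); apply/eqP.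
  apply: (eq_from3 (k1 := - x ^+ 2) (k2 := y ^+ 2) (k3 := b1) e1 e2 hz); rewrite /qf; ring.
- have [x [y [hxy hz]]] := qf_zero b0 b1 b2.
  apply: (H _ _ hxy); split => //; apply/eqP.
  rewrite -(mulIr_eq0 _ (mulIf hb1)); apply/eqP.
  apply: (eq_from3 (k1 := x ^+ 2) (k2 := - y ^+ 2) (k3 := a1) e1 e2 hz); rewrite /qf; ring.
Qed.

End Quad.


Section Exist.
Variable C : numClosedFieldType.
Variables a0 a1 a2 b0 b1 b2 u1 v1 u2 v2 : C.

Definition w2 := 2 * (a2 * b1 - a1 * b2).
Definition w1 := 4 * (a2 * b0 - a0 * b2).
Definition w0 := 2 * (a1 * b0 - a0 * b1).
Definition ee := u1 * v2 - u2 * v1.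
Definition Ta (x y : C) := qf a0 a1 a2 (v1 * x + v2 * y) (- u1 * x + - u2 * y).
Definition Tb (x y : C) := qf b0 b1 b2 (v1 * x + v2 * y) (- u1 * x + - u2 * y).
Definition Pg (x y : C) := - u2 * Ta x y - v2 * Tb x y.
Definition Qg (x y : C) := u1 * Ta x y + v1 * Tb x y.
Definition g2 := Pg 1 0.
Definition g0 := Pg 0 1.
Definition g1 := Pg 1 1 - g2 - g0.
Definition h2 := Qg 1 0.
Definition h0 := Qg 0 1.
Definition h1 := Qg 1 1 - h2 - h0.

Lemma Pg_qf x y : Pg x y = qf g0 g1 g2 x y.
Proof. by rewrite /g1 /g0 /g2 /Pg /Ta /Tb /qf; ring. Qed.
Lemma Qg_qf x y : Qg x y = qf h0 h1 h2 x y.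
Proof. by rewrite /h1 /h0 /h2 /Qg /Ta /Tb /qf; ring. Qed.

Lemma W1 : 2 * (g2 * h1 - g1 * h2) = ee ^+ 2 * qf w0 w1 w2 v1 (- u1).
Proof. rewrite /g1 /h1 /g0 /g2 /h0 /h2 /Pg /Qg /Ta /Tb /qf /w0 /w1 /w2 /ee; ring. Qed.
Lemma W2 : 2 * (g1 * h0 - g0 * h1) = ee ^+ 2 * qf w0 w1 w2 v2 (- u2).
Proof. rewrite /g1 /h1 /g0 /g2 /h0 /h2 /Pg /Qg /Ta /Tb /qf /w0 /w1 /w2 /ee; ring. Qed.


Lemma PgM x y : Pg (- u2 * x + - v2 * y) (u1 * x + v1 * y) =
  ee ^+ 2 * (- u2 * qf a0 a1 a2 x y + - v2 * qf b0 b1 b2 x y).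
Proof. rewrite /Pg /Ta /Tb /qf /ee; ring. Qed.
Lemma QgM x y : Qg (- u2 * x + - v2 * y) (u1 * x + v1 * y) =
  ee ^+ 2 * (u1 * qf a0 a1 a2 x y + v1 * qf b0 b1 b2 x y).
Proof. rewrite /Qg /Ta /Tb /qf /ee; ring. Qed.
Lemma Ta_inv x y : ee * Ta x y = v1 * Pg x y + v2 * Qg x y.
Proof. rewrite /Pg /Qg /ee; ring. Qed.
Lemma Tb_inv x y : ee * Tb x y = - u1 * Pg x y - u2 * Qg x y.
Proof. rewrite /Pg /Qg /ee; ring. Qed.

Lemma exist_nf : nocommon a0 a1 a2 b0 b1 b2 ->
  w2 = u1 * u2 -> w1 = u1 * v2 + u2 * v1 -> w0 = v1 * v2 ->
  exists al be ga de : C, al * de - be * ga = 1 /\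
    mob_conj (ratmap2 a0 a1 a2 b0 b1 b2) (normal_form al be ga de).
Proof.
move=> H e2 e1 e0.
have h2n := two_neq0 C.
have hres := res_nz H.
have hee : ee != 0.
  have E : ee ^+ 2 = 2 ^+ 4 * res a0 a1 a2 b0 b1 b2.
    transitivity (w1 ^+ 2 - 4 * w2 * w0); first by rewrite e1 e2 e0 /ee; ring.
    by rewrite /w1 /w2 /w0 /res; ring.
  apply/eqP => e; move: E; rewrite e expr0n /= => /esym/eqP.
  by rewrite mulf_eq0 expf_eq0 /= (negbTE h2n) (negbTE hres).
have hW1 : g2 * h1 = g1 * h2.
  apply/eqP; rewrite -subr_eq0; apply/eqP; apply: (mulfI h2n).
  by rewrite W1 e0 e1 e2 /qf; ring.
have hW2 : g1 * h0 = g0 * h1.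
  apply/eqP; rewrite -subr_eq0; apply/eqP; apply: (mulfI h2n).
  by rewrite W2 e0 e1 e2 /qf; ring.
have hT : v1 * - u2 - v2 * - u1 != 0 by rewrite (_ : _ - _ = ee) // /ee; ring.
have Hg : nocommon g0 g1 g2 h0 h1 h2.
  move=> x y hxy [p0 q0]; rewrite -Pg_qf in p0; rewrite -Qg_qf in q0.
  apply: (H _ _ (M_nz hT hxy)); split.
    apply: (mulfI hee); rewrite [LHS]Ta_inv p0 q0; ring.
  apply: (mulfI hee); rewrite [LHS]Tb_inv p0 q0; ring.
have [hg1 hh1] := mid0 Hg hW1 hW2.
have hD : g2 * h0 - g0 * h2 != 0.
  have := res_nz Hg; rewrite /res hg1 hh1.
  by rewrite (_ : _ - _ = (g2 * h0 - g0 * h2) ^+ 2) ?expf_eq0 //; ring.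
set c := (sqrtC (g2 * h0 - g0 * h2))^-1.
have hc2 : c ^+ 2 * (g2 * h0 - g0 * h2) = 1.
  by rewrite /c exprVn sqrtCK mulVf.
have hc : c != 0.
  by apply/eqP => e; move: hc2; rewrite e expr0n mul0r => /eqP; rewrite eq_sym oner_eq0.
exists (c * g2), (c * g0), (c * h2), (c * h0); split.
  by rewrite -hc2; ring.
exists (- u2), (- v2), u1, v1; split.
  by rewrite (_ : _ - _ = ee) // /ee; ring.
have hM : - u2 * v1 - - v2 * u1 != 0 by rewrite (_ : _ - _ = ee) // /ee; ring.
apply: sphere_ind => x y h.
rewrite ratmap2_proj // mobius_proj ?(nocommon_nz H h) //.
rewrite mobius_proj // /normal_form ratmap2_proj ?M_nz //.
rewrite -[LHS](@projZ _ (c * ee ^+ 2)) ?mulf_neq0 ?expf_neq0 //; congr proj.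
  transitivity (c * Pg (- u2 * x + - v2 * y) (u1 * x + v1 * y)).
    by rewrite PgM; ring.
  by rewrite Pg_qf hg1 /qf; ring.
transitivity (c * Qg (- u2 * x + - v2 * y) (u1 * x + v1 * y)).
  by rewrite QgM; ring.
by rewrite Qg_qf hh1 /qf; ring.
Qed.

End Exist.


Section Final.
Variable C : numClosedFieldType.

Lemma Rat2_nf (f : sphere C -> sphere C) : Rat2 f ->
  exists al be ga de : C, al * de - be * ga = 1 /\
    mob_conj f (normal_form al be ga de).
Proof.
case=> [a0 [a1 [a2 [b0 [b1 [b2 [Hn Hf]]]]]]].
have H : nocommon a0 a1 a2 b0 b1 b2.
  move=> x y /nzP h; apply: Hn => -[e1 e2]; exact: h.
have [u1 [v1 [u2 [v2 [e2 e1 e0]]]]] :=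
  factor2 (w0 a0 a1 b0 b1) (w1 a0 a2 b0 b2) (w2 a1 a2 b1 b2).
have [al [be [ga [de [hd [p [q [r [s [hM HM]]]]]]]]]] := exist_nf H e2 e1 e0.
exists al, be, ga, de; split => //.
exists p, q, r, s; split => // z; rewrite Hf; exact: HM.
Qed.

Lemma surj_nf (a s : C) : exists al be ga de : C,
  [/\ al * de - be * ga = 1, a = al * de & s = al ^+ 3 * be + ga * de ^+ 3].
Proof.
have h2 := two_neq0 C.
case: (eqVneq a 0) => ha.
  case: (eqVneq s 0) => hs.
    by exists 0, 1, (-1), 0; split; rewrite ?ha ?hs; ring.
  exists 1, s, (- 1 / s), 0; split; rewrite ?ha; first by field.
    by ring.
  by ring.
set d := sqrtC (s ^+ 2 - 4 * (a ^+ 3 * (a - 1))).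
have hd : d ^+ 2 = s ^+ 2 - 4 * (a ^+ 3 * (a - 1)) by rewrite sqrtCK.
exists 1, ((s + d) / 2), ((s - d) / 2 / a ^+ 3), a; split.
- have -> : 1 * a - (s + d) / 2 * ((s - d) / 2 / a ^+ 3) =
     a - (s ^+ 2 - d ^+ 2) / 4 / a ^+ 3 by field; rewrite ha.
  rewrite hd; field; by rewrite ha.
- by ring.
- by field; rewrite ha.
Qed.

End Final.

Unset Implicit Arguments.

Theorem mainTheorem11 (R : rcfType) :
  let C := R[i] in
  (* every class has a value *)
  (forall f : sphere C -> sphere C, Rat2 f -> exists a s : C, ASigma_of f a s) /\
  (* well defined on conjugacy classes, independent of the marking *)
  (forall (f g : sphere C -> sphere C) (a s a' s' : C),
     Rat2 f -> Rat2 g -> mob_conj f g ->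
     ASigma_of f a s -> ASigma_of g a' s' -> a = a' /\ s = s') /\
  (* injective on M_2 *)
  (forall (f g : sphere C -> sphere C) (a s : C),
     Rat2 f -> Rat2 g -> ASigma_of f a s -> ASigma_of g a s -> mob_conj f g) /\
  (* surjective onto C^2 *)
  (forall a s : C, exists f : sphere C -> sphere C, Rat2 f /\ ASigma_of f a s).
Proof.
move=> C; split; [|split; [|split]].
- move=> f hf; have [al [be [ga [de [h1 hc]]]]] := @Rat2_nf C f hf.
  exists (al * de), (al ^+ 3 * be + ga * de ^+ 3), al, be, ga, de; split => //.
- move=> f g a s a' s' _ _ hfg [al [be [ga [de [h1 [hc [-> ->]]]]]]]
    [al' [be' [ga' [de' [h1' [hc' [-> ->]]]]]]].
  apply: (@nf_conj_inv C) => //.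
  exact: mob_conj_trans (mob_conj_sym hc) (mob_conj_trans hfg hc').
- move=> f g a s _ _ [al [be [ga [de [h1 [hc [ha hs]]]]]]]
    [al' [be' [ga' [de' [h1' [hc' [ha' hs']]]]]]].
  apply: mob_conj_trans hc _; apply: mob_conj_trans _ (mob_conj_sym hc').
  apply: (@nf_same_conj C) => //; by rewrite -?ha -?ha' -?hs -?hs'.
- move=> a s; have [al [be [ga [de [h1 ha hs]]]]] := @surj_nf C a s.
  have hd : al * de - be * ga != 0 by rewrite h1 oner_eq0.
  exists (normal_form al be ga de); split.
    exists be, 0, al, de, 0, ga; split => //.
    move=> x y hxy; exact: (nf_nocommon hd) (nz_pair hxy).
  exists al, be, ga, de; split => //; split => //; exact: mob_conj_refl.
Qed.
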